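(* Let $\{y_t\}_{t\in\mathbb{Z}}$ be a real, mean-zero, covariance-stationary series with $\mathcal{F}_t=\sigma(y_s,\,s\le t)$, such that $y_t=\sum_{s=0}^{\infty}\kappa_s\epsilon_{t-s}$ with $\kappa_0=1$, $\sum_s|\kappa_s|<\infty$, $\kappa(z)=\sum_s\kappa_sz^s\ne0$ for $|z|\le1$, $\{\epsilon_t\}$ a martingale difference sequence with respect to $\{\mathcal{F}_t\}$, $E[\epsilon_t^2\mid\mathcal{F}_{t-1}]=\sigma_\epsilon^2$ a.s. (constant), and $\sup_t|\epsilon_t|\le K<\infty$ a.s. Suppose moreover that $\sup_tE[|\epsilon_t|^{2p}\mid\mathcal{F}_{t-1}]<\infty$ a.s. for some $p>1$. Then for any sequence $\hat y_t=y_t-\tilde y_{t-1}$ in which each $\tilde y_{t-1}$ is $\mathcal{F}_{t-1}$-measurable, it holds that $\liminf_{t\to\infty}t^{-1}\sum_{s=1}^t\hat y_s^2\ge\sigma_\epsilon^2$ almost surely, where $\sigma_\epsilon^2=E[\epsilon_t^2]$. *)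

(* Defs.v *)
From HB Require Import structures.
From mathcomp Require Import all_boot all_algebra.
From mathcomp Require Import all_classical all_reals all_analysis.
From mathcomp Require Import complex.
Set Implicit Arguments. Unset Strict Implicit. Unset Printing Implicit Defensive.
Import GRing.Theory Num.Theory numFieldNormedType.Exports.
Local Open Scope classical_set_scope.
Local Open Scope ring_scope.

Definition natural_filtration (T : Type) (R : realType) (y : int -> T -> R)
  (t : int) : set (set T) :=
  <<s [set A | exists s : int, (s <= t)%R /\
        exists B : set R, measurable B /\ A = y s @^-1` B] >>.

Definition G_measurable (T : Type) (R : realType) (G : set (set T))
  (f : T -> R) : Prop :=
  forall B : set R, measurable B -> G (f @^-1` B).

Definition is_cond_exp d (T : measurableType d) (R : realType)
  (P : probability T R) (G : set (set T)) (X Z : T -> R) : Prop :=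
  [/\ G_measurable G Z,
      P.-integrable setT (EFin \o Z) &
      forall A, G A -> (\int[P]_(x in A) (X x)%:E = \int[P]_(x in A) (Z x)%:E)%E].

(* kappa(z) = sum_s kappa_s z^s for complex z, the complex series being
   summed componentwise (real and imaginary parts). *)
Definition power_series_at (R : realType) (k : nat -> R) (z : R[i]) : R[i] :=
  Complex (limn (series (fun s : nat => (complex.Re (Complex (k s) 0 * z ^+ s) : R)) : R^nat))
          (limn (series (fun s : nat => (complex.Im (Complex (k s) 0 * z ^+ s) : R)) : R^nat)).

(* Main.v *)
Require Import Defs.
From HB Require Import structures.
From mathcomp Require Import all_boot all_algebra.
From mathcomp Require Import all_classical all_reals all_analysis.
From mathcomp Require Import complex.
From mathcomp Require Import all_order measurable_realfun.
From mathcomp Require Import ring lra zify.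
Import GRing.Theory Num.Theory numFieldNormedType.Exports.
Import Order.TTheory.
Local Open Scope classical_set_scope.
Local Open Scope ring_scope.

Section aux.
Context {R : realType}.

Definition cnt (N : nat) (a : R) : R :=
  \sum_(k < N) (if (k.+1)%:R <= a then 1 else 0).

Lemma cntS N a : cnt N.+1 a = cnt N a + (if N.+1%:R <= a then 1 else 0).
Proof. by rewrite /cnt big_ord_recr. Qed.

Lemma cnt_le_N N a : cnt N a <= N%:R.
Proof.
elim: N => [|N IH]; first by rewrite /cnt big_ord0.
rewrite cntS -natr1; apply: lerD => //; by case: ifP.
Qed.

Lemma cnt_ge0 N a : 0 <= cnt N a.
Proof.
elim: N => [|N IH]; first by rewrite /cnt big_ord0.
rewrite cntS; apply: addr_ge0 => //; by case: ifP.
Qed.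

Lemma cnt_all N a : N%:R <= a -> cnt N a = N%:R.
Proof.
elim: N => [|N IH] Na; first by rewrite /cnt big_ord0.
rewrite cntS Na IH ?natr1 //; apply: le_trans Na; rewrite ler_nat; exact: leqnSn.
Qed.

Lemma cnt_ub N a : 0 <= a -> cnt N a <= a.
Proof.
move=> a0; elim: N => [|N IH]; first by rewrite /cnt big_ord0.
rewrite cntS; case: ifP => Na; last by rewrite addr0.
apply: le_trans Na; rewrite -natr1 lerD2r; exact: cnt_le_N.
Qed.

Lemma cnt_lb N a : a < N%:R + 1 -> a - 1 < cnt N a.
Proof.
elim: N a => [|N IH] a aN; first by rewrite /cnt big_ord0; lra.
rewrite cntS; case: ifP => Na.
  rewrite cnt_all; last by apply: le_trans Na; rewrite ler_nat.
  move: aN; rewrite -natr1; lra.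
rewrite addr0; apply: IH; move/negbT: Na; rewrite -ltNge -natr1; lra.
Qed.

Definition clamp (c z : R) : R := Num.max (- c) (Num.min c z).

Lemma clamp_bound c z : 0 <= c -> `|clamp c z| <= c.
Proof.
move=> c0; rewrite /clamp ler_norml; apply/andP; split.
  by rewrite le_max lexx.
rewrite ge_max ge_min lexx orTb andbT; lra.
Qed.

Lemma clamp_id c z : `|z| <= c -> clamp c z = z.
Proof.
rewrite ler_norml => /andP[h1 h2].
by rewrite /clamp (min_idPr h2) (max_idPr h1).
Qed.

Lemma key_ineq c e v : `|e| <= c ->
  e ^+ 2 + 2 * e * clamp (2 * c) v <= (e + v) ^+ 2.
Proof.
move=> ec; have c0 : 0 <= c by apply: le_trans ec.
move: ec; rewrite ler_norml => /andP[h1 h2].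
rewrite /clamp.
have [vc|vc] := leP v (2 * c); have [v2|v2] := leP (- (2 * c)) v;
  rewrite ?(min_idPr (ltW vc)) ?(min_idPl (ltW vc)) ?(max_idPr v2) ?(max_idPl (ltW v2)) ?(max_idPr (ltW v2));
  try nra.
all: rewrite ?(min_idPr (ltW vc)) ?(min_idPl (ltW vc)) ?(max_idPr v2) ?(max_idPl (ltW v2)) ?(max_idPr (ltW v2)).
all: try nra.
all: try lra.
all: have hc : - (2 * c) <= 2 * c by lra.
all: rewrite (max_idPr hc); nra.
Qed.

Lemma norm_sq_le (a b : R) : `|a| <= b -> `|a ^+ 2| <= b ^+ 2.
Proof.
move=> h; have b0 : 0 <= b by apply: le_trans h.
by rewrite normrX lerXn2r // nnegrE.
Qed.

Lemma norm_mul_le (a b A B : R) : `|a| <= A -> `|b| <= B -> `|a * b| <= A * B.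
Proof. by move=> h1 h2; rewrite normrM; apply: ler_pM. Qed.

End aux.
Section orth.
Context {d : measure_display} {T : measurableType d} {R : realType} (P : probability T R).

Lemma bint (f : T -> R) (c : R) : measurable_fun setT f ->
  (forall x, `|f x| <= c) -> P.-integrable setT (EFin \o f).
Proof.
move=> mf fc; apply: measurable_bounded_integrable => //.
  by apply: (le_lt_trans (probability_le1 P measurableT)); rewrite ltry.
exists c; split; first exact: num_real.
by move=> M cM x _; apply: le_trans (fc x) (ltW cM).
Qed.

Lemma Rint_sum (N : nat) (f : nat -> T -> R) :
  (forall k, P.-integrable setT (EFin \o f k)) ->
  P.-integrable setT (EFin \o (fun x => \sum_(k < N) f k x)) /\
  \int[P]_x (\sum_(k < N) f k x) = \sum_(k < N) \int[P]_x f k x.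
Proof.
move=> fi; elim: N => [|N [IHi IHe]].
  under eq_fun do rewrite big_ord0.
  split; last by rewrite big_ord0 Rintegral_cst // mul0r.
  apply: (bint _ 0); [exact: measurable_cst| by move=> x; rewrite normr0].
have -> : (fun x => \sum_(k < N.+1) f k x) = (fun x => \sum_(k < N) f k x + f N x).
  by apply/funext => x; rewrite big_ord_recr.
split.
  have -> : EFin \o (fun x => \sum_(k < N) f k x + f N x) =
     (EFin \o (fun x => \sum_(k < N) f k x)) \+ (EFin \o f N) by apply/funext.
  exact: integrableD.
by rewrite RintegralD // IHe big_ord_recr.
Qed.


Lemma orth0 (H : set (set T)) (X Z : T -> R) (B M : R) :
  <<s H >> `<=` measurable ->
  measurable_fun setT X -> (forall x, `|X x| <= B) ->
  (forall A, <<s H >> A -> \int[P]_(x in A) X x = 0) ->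
  measurable_fun (setT : set (g_sigma_algebraType H)) Z ->
  (forall x, 0 <= Z x <= M) ->
  \int[P]_x (X x * Z x) = 0.
Proof.
move=> Hs mX XB XA mZG ZM.
have mZ : measurable_fun setT Z.
  by move=> _ Y mY; apply: Hs; exact: (mZG measurableT Y mY).
have B0 : 0 <= B by apply: le_trans (XB point).
have M0 : 0 <= M by case/andP: (ZM point) => h1 h2; apply: le_trans h2.
have mXZ : measurable_fun setT (fun x => X x * Z x) by exact: measurable_funM.
have iXZ : P.-integrable setT (EFin \o (fun x => X x * Z x)).
  apply: (bint _ (B * M)) => // x; rewrite normrM.
  apply: ler_pM => //; case/andP: (ZM x) => h1 h2; by rewrite ger0_norm.
suff hn : forall n : nat, `|\int[P]_x (X x * Z x)| <= B / n.+1%:R.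
  apply/eqP; rewrite -normr_eq0; apply/eqP; apply: le_anti.
  rewrite normr_ge0 andbT leNgt; apply/negP => a0.
  set a := `|_| in a0 hn.
  have ba0 : 0 <= B / a by rewrite divr_ge0 // ltW.
  have := archi_boundP ba0; set N := Num.Def.archi_bound _ => hN.
  have := hn N; set s := B / _ => hs.
  have ta : B / a * a = B by rewrite divfK // gt_eqF.
  have sN : s * N.+1%:R = B by rewrite /s divfK // pnatr_eq0.
  move: sN; rewrite -natr1 => sN.
  have N0 : (0 : R) <= N%:R by [].
  nra.
move=> n.
set m : R := n.+1%:R.
have m0 : 0 < m by rewrite /m ltr0n.
have [N hN] : exists N : nat, M * m < N%:R.
  by exists (Num.Def.archi_bound (M * m)); apply: archi_boundP; rewrite mulr_ge0 // ltW.
pose A (k : nat) := [set x : T | (k.+1)%:R <= m * Z x].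
have mmZ : measurable_fun (setT : set (g_sigma_algebraType H)) (fun x => m * Z x).
  exact: measurable_funM.
have GA k : <<s H >> (A k).
  have := mmZ measurableT _ (measurable_itv `[(k.+1)%:R, +oo[).
  rewrite setTI; congr (<<s H >> _); apply/seteqP; split => x /=;
    by rewrite in_itv /= andbT.
have mA k : measurable (A k) by exact: Hs.
pose Zn x := m^-1 * \sum_(k < N) \1_(A k) x.
have cntE x : \sum_(k < N) \1_(A k) x = cnt N (m * Z x).
  rewrite /cnt; apply: eq_bigr => k _; rewrite indicE.
  case: ifP => h; first by rewrite mem_set.
  by rewrite memNset // => h'; move: h; rewrite h'.
have Zb x : 0 <= Z x - Zn x <= m^-1.
  rewrite /Zn cntE; case/andP: (ZM x) => z0 zM.
  have a0 : 0 <= m * Z x by rewrite mulr_ge0 // ltW.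
  have := cnt_ub N _ a0; have : m * Z x < N%:R + 1.
    apply: le_lt_trans (_ : M * m < _); last by lra.
    by rewrite mulrC ler_pM2r.
  move=> /cnt_lb h1 h2.
  have mq : m * m^-1 = 1 by rewrite divff // gt_eqF.
  have mi0 : 0 < m^-1 by rewrite invr_gt0.
  set c := cnt _ _ in h1 h2 *.
  set q := m^-1 in mq mi0 *.
  apply/andP; split; nra.
have mZn : measurable_fun setT Zn.
  apply: measurable_funM; first exact: measurable_cst.
  by apply: measurable_sum => k; exact: measurable_indic.
have iXZn : P.-integrable setT (EFin \o (fun x => X x * Zn x)).
  apply: (bint _ (B * M)); first exact: measurable_funM.
  move=> x; rewrite normrM; apply: ler_pM => //.
  case/andP: (Zb x) (ZM x) => h1 h2 /andP[h3 h4].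
  rewrite ler_norml; apply/andP; split; last by lra.
  rewrite /Zn cntE; apply: le_trans (_ : 0 <= _); first by lra.
  by rewrite mulr_ge0 ?cnt_ge0 // invr_ge0 ltW.
have XZn0 : \int[P]_x (X x * Zn x) = 0.
  have -> : (fun x => X x * Zn x) =
      (fun x => m^-1 * \sum_(k < N) (X x * \1_(A k) x)).
    by apply/funext => x; rewrite /Zn mulrCA mulr_sumr.
  have ik k : P.-integrable setT (EFin \o (fun x => X x * \1_(A k) x)).
    apply: (bint _ B); first by apply: measurable_funM => //; exact: measurable_indic.
    move=> x; rewrite normrM indicE; case: (x \in A k); rewrite ?normr1 ?normr0 ?mulr1 ?mulr0 //.
  have [isum esum] := Rint_sum N _ ik.
  rewrite RintegralZl // esum big1 ?mulr0 // => k _.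
  rewrite -(XA _ (GA k)) (Rintegral_mkcond _ (A k)); apply: eq_Rintegral => x _.
  by rewrite patchE indicE; case: (x \in A k); rewrite ?mulr1 ?mulr0.
have -> : \int[P]_x (X x * Z x) = \int[P]_x (X x * Z x - X x * Zn x).
  by rewrite RintegralB // XZn0 subr0.
apply: le_trans (le_normr_Rintegral _ _) _ => //.
  by apply: (integrableB measurableT iXZ iXZn).
apply: le_trans (_ : \int[P]_x (B / m) <= _).
  apply: le_Rintegral => //.
  - apply: integrable_norm; exact: (integrableB measurableT iXZ iXZn).
  - apply: (bint _ (B / m)); first exact: measurable_cst.
    by move=> _; rewrite ger0_norm // divr_ge0 // ltW.
  move=> x _; rewrite -mulrBr normrM.
  case/andP: (Zb x) => h1 h2; rewrite (ger0_norm h1).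
  by apply: ler_pM => //; rewrite mulrC.
rewrite Rintegral_cst //.
have -> : fine (P setT) = 1 by have /= -> := probability_setT P.
by rewrite mulr1.
Qed.

Lemma bintD (D : set T) (f : T -> R) (c : R) : measurable D -> measurable_fun setT f ->
  (forall x, `|f x| <= c) -> P.-integrable D (EFin \o f).
Proof.
move=> mD mf fc; apply: measurable_bounded_integrable => //.
  by apply: (le_lt_trans (probability_le1 P mD)); rewrite ltry.
  exact: measurable_funTS.
exists c; split; first exact: num_real.
by move=> M cM x _; apply: le_trans (fc x) (ltW cM).
Qed.

Lemma orth (H : set (set T)) (X Z : T -> R) (B M : R) :
  <<s H >> `<=` measurable ->
  measurable_fun setT X -> (forall x, `|X x| <= B) ->
  (forall A, <<s H >> A -> \int[P]_(x in A) X x = 0) ->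
  measurable_fun (setT : set (g_sigma_algebraType H)) Z ->
  (forall x, `|Z x| <= M) ->
  \int[P]_x (X x * Z x) = 0.
Proof.
move=> Hs mX XB XA mZG ZM.
have M0 : 0 <= M by apply: le_trans (ZM point).
have B0 : 0 <= B by apply: le_trans (XB point).
have mZ : measurable_fun setT Z.
  by move=> _ Y mY; apply: Hs; exact: (mZG measurableT Y mY).
have h := @orth0 H X (fun x => Z x + M) B (M + M) Hs mX XB XA.
have XT : \int[P]_x X x = 0 by apply: XA; exact: (@measurableT _ (g_sigma_algebraType H)).
have : \int[P]_x (X x * (Z x + M)) = 0.
  apply: h.
    apply: measurable_funD => //; exact: measurable_cst.
  by move=> x; have := ZM x; rewrite ler_norml => /andP[h1 h2]; apply/andP; split; lra.
have -> : (fun x => X x * (Z x + M)) = (fun x => X x * Z x + M * X x).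
  by apply/funext => x; rewrite mulrDr (mulrC (X x) M).
have iXZ : P.-integrable setT (EFin \o (fun x => X x * Z x)).
  apply: (bint _ (B * M)); first exact: measurable_funM.
  by move=> x; rewrite normrM; apply: ler_pM.
have iMX : P.-integrable setT (EFin \o (fun x => M * X x)).
  apply: (bint _ (M * B)); first by apply: measurable_funM => //; exact: measurable_cst.
  by move=> x; rewrite normrM ger0_norm //; apply: ler_pM.
have iX : P.-integrable setT (EFin \o X) by exact: (bint _ B).
rewrite RintegralD // RintegralZl //.
rewrite XA ?mulr0 ?addr0 //.
exact: (@measurableT _ (g_sigma_algebraType H)).
Qed.

End orth.

Section filt.
Context {d : measure_display} {T : measurableType d} {R : realType}.
Variable y : int -> T -> R.

Definition gen (t : int) : set (set T) :=
  [set A | exists s : int, (s <= t)%R /\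
        exists B : set R, measurable B /\ A = y s @^-1` B].

Lemma nfE t : natural_filtration y t = <<s gen t >>.
Proof. by []. Qed.

Lemma nf_sub t : (forall t, measurable_fun setT (y t)) ->
  <<s gen t >> `<=` measurable.
Proof.
move=> my; apply: smallest_sub; first exact: sigma_algebra_measurable.
move=> A [s [_ [B [mB ->]]]]; have := my s measurableT B mB; by rewrite setTI.
Qed.

Lemma gen_mono t1 t2 : (t1 <= t2)%R -> <<s gen t1 >> `<=` <<s gen t2 >>.
Proof.
move=> t12; apply: smallest_sub; first exact: smallest_sigma_algebra.
move=> A [s [st1 rest]]; apply: sub_gen_smallest; exists s; split => //.
exact: le_trans st1 t12.
Qed.

Lemma Gm_mf t (f : T -> R) : G_measurable (natural_filtration y t) f ->
  measurable_fun (setT : set (g_sigma_algebraType (gen t))) f.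
Proof. by move=> h _ B mB; rewrite setTI; exact: h. Qed.

Lemma mf_mono t1 t2 (f : T -> R) : (t1 <= t2)%R ->
  measurable_fun (setT : set (g_sigma_algebraType (gen t1))) f ->
  measurable_fun (setT : set (g_sigma_algebraType (gen t2))) f.
Proof.
move=> t12 h _ B mB; exact (gen_mono _ _ t12 _ (h measurableT B mB)).
Qed.

Lemma mf_T t (f : T -> R) : (forall t, measurable_fun setT (y t)) ->
  measurable_fun (setT : set (g_sigma_algebraType (gen t))) f ->
  measurable_fun setT f.
Proof. by move=> my h _ B mB; apply: (nf_sub t my); exact: h. Qed.

End filt.

Lemma inv_sq_sum {R : realType} n :
  \sum_(i < n) ((i.+1 * i.+1)%N%:R)^-1 <= 2 - 2 / n.+1%:R :> R.
Proof.
elim: n => [|n IH]; first by rewrite big_ord0 divr1 subrr.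
rewrite big_ord_recr /=.
apply: le_trans (lerD IH (lexx _)) _.
rewrite natrM -[n.+2%:R]natr1.
set a : R := n.+1%:R.
have a1 : 1 <= a by rewrite /a ler1n.
have a0 : 0 < a by lra.
have pa : a^-1 * a = 1 by rewrite mulVf // gt_eqF.
have qa : (a + 1)^-1 * (a + 1) = 1 by rewrite mulVf // gt_eqF //; lra.
have p0 : 0 < a^-1 by rewrite invr_gt0.
have q0 : 0 < (a + 1)^-1 by rewrite invr_gt0; lra.
rewrite invfM.
set p := a^-1 in pa p0 *; set q := (a + 1)^-1 in qa q0 *.
have pq : p * q = p - q.
  have : p * q * (a + 1) = p by rewrite -mulrA qa mulr1.
  have : p * q * a = q by rewrite mulrAC pa mul1r.
  lra.
have p1 : p <= 1 by nra.
have p2q : p <= 2 * q by nra.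
rewrite ?mulr1; nra.
Qed.

Section det.
Context {R : realType}.

Lemma sq_bracket t : (0 < t)%N -> exists m, (m.+1 * m.+1 <= t)%N /\ (t < m.+2 * m.+2)%N.
Proof.
elim: t => [//|t IH] _.
case: t IH => [|t] IH; first by exists 0%N.
have [m [h1 h2]] := IH isT.
have [h3|h3] := ltnP t.+2 (m.+2 * m.+2).
  by exists m; split => //; lia.
by exists m.+1; split; nia.
Qed.

Lemma tele (S : nat -> R) Cb k j : (forall n, `|S n.+1 - S n| <= Cb) ->
  `|S (k + j)%N - S k| <= j%:R * Cb.
Proof.
move=> Sinc; elim: j => [|j IH]; first by rewrite addn0 subrr normr0 mul0r.
rewrite addnS (_ : S (k + j).+1 - S k = (S (k + j).+1 - S (k + j)) + (S (k + j) - S k)).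
  by apply: le_trans (ler_normD _ _) _; rewrite -natr1 mulrDl mul1r addrC; apply: lerD.
by rewrite addrA subrK.
Qed.

Lemma det (S : nat -> R) (Cb : R) (a : nat -> R) (sig : R) :
 (forall n, `|S n.+1 - S n| <= Cb) ->
 (forall eps, 0 < eps -> exists M, forall m, (M <= m)%N ->
     `|S (m.+1 * m.+1)%N| <= eps * (m.+1 * m.+1)%N%:R) ->
 (forall t, (0 < t)%N -> sig + S t / t%:R <= a t) ->
 (sig%:E <= limn_einf (fun t => (a t)%:E))%E.
Proof.
move=> Sinc Ssub Sa.
have Cb0 : 0 <= Cb by apply: le_trans (Sinc 0%N).
apply/lee_subgt0Pr => eps e0; rewrite -EFinB.
have e20 : 0 < eps / 2 by rewrite divr_gt0.
have [M1 hM1] := Ssub _ e20.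
set M2 := Num.Def.archi_bound (6 * Cb / eps).
have hM2 : 6 * Cb / eps < M2%:R.
  by apply: archi_boundP; rewrite divr_ge0 // ?mulr_ge0 // ltW.
set M := maxn M1 M2.
have key t : ((M.+1 * M.+1) <= t)%N -> sig - eps <= a t.
  move=> tM.
  have t0 : (0 < t)%N by apply: leq_trans tM; rewrite muln_gt0.
  have [m [h1 h2]] := sq_bracket _ t0.
  have mM : (M <= m)%N by nia.
  have hm1 := hM1 m (leq_trans (leq_maxl _ _) mM).
  have hm2 : (M2 <= m)%N := leq_trans (leq_maxr _ _) mM.
  have htel := tele S Cb (m.+1 * m.+1) (t - m.+1 * m.+1) Sinc.
  rewrite subnKC // in htel.
  have tN : (t - m.+1 * m.+1 <= 2 * m + 3)%N by nia.
  set r : R := m%:R.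
  have r0 : 0 <= r by rewrite /r.
  have eN : (m.+1 * m.+1)%N%:R = (r + 1) * (r + 1) :> R by rewrite natrM -natr1.
  have hsN : `|S (m.+1 * m.+1)%N| <= eps / 2 * ((r + 1) * (r + 1)) by rewrite -eN.
  have hdd : (t - m.+1 * m.+1)%N%:R <= 2 * r + 3 :> R.
    by rewrite (_ : 2 * r + 3 = (2 * m + 3)%N%:R) ?ler_nat // natrD natrM.
  have hNt : (r + 1) * (r + 1) <= t%:R :> R by rewrite -eN ler_nat.
  have hm2r : M2%:R <= r :> R by rewrite ler_nat.
  have hsa := Sa t t0.
  move: hM2; rewrite ltr_pdivrMr // => hM2.
  have tt0 : 0 < t%:R :> R by rewrite ltr0n.
  move: htel hsN hdd hNt hsa tt0.
  set tt := t%:R; set st := S t; set sN := S _; set dd := (_ - _)%N%:R.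
  move=> htel hsN hdd hNt hsa tt0.
  have hst : `|st| <= eps * tt.
    have : `|st| <= `|sN| + `|st - sN|.
      by have := ler_normD sN (st - sN); rewrite [sN + _]addrC subrK.
    move=> h9; apply: le_trans h9 _.
    have : dd * Cb <= (2 * r + 3) * Cb by apply: ler_wpM2r.
    have : 6 * Cb <= eps * r by apply: le_trans (ltW hM2) _; rewrite mulrC ler_pM2l.
    nra.
  have : - eps <= st / tt.
    rewrite ler_pdivlMr //; move: hst; rewrite ler_norml => /andP[h9 _]; lra.
  lra.
rewrite limn_einf_lim; apply: lime_ge; first exact: is_cvg_einfs.
exists (M.+1 * M.+1)%N => // n /= hn.
apply: le_ereal_inf_tmp => _ [k /= nk <-].
by rewrite lee_fin; apply: key; apply: leq_trans nk.
Qed.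

End det.

Section main.
Context {d : measure_display} {T : measurableType d} {R : realType} (P : probability T R).
Variables (y eps ytil : int -> T -> R) (kappa : nat -> R) (sigma2 K : R).
Hypothesis my : forall t, measurable_fun setT (y t).
Hypothesis epsG : forall t, G_measurable (natural_filtration y t) (eps t).
Hypothesis ytilG : forall t, G_measurable (natural_filtration y t) (ytil t).

Local Notation G t := (setT : set (g_sigma_algebraType (gen y t))).

Let K0 := `|K|.
Let K00 : 0 <= K0. Proof. exact: normr_ge0. Qed.

Definition e t x := clamp K0 (eps t x).

Lemma e_bound t x : `|e t x| <= K0.
Proof. exact: clamp_bound. Qed.

Lemma me t : measurable_fun (G t) (e t).
Proof.
apply: measurable_maxr; first exact: measurable_cst.
apply: measurable_minr; first exact: measurable_cst.
exact: Gm_mf.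
Qed.

Definition ws (s : nat) x := fine (limn_esup
  (fun n => (\sum_(k < n) kappa k.+1 * e (s%:Z - (k.+1)%:Z) x)%:E)).

Lemma mws s : measurable_fun (G (s%:Z - 1)) (ws s).
Proof.
apply: measurableT_comp; first exact: fine_measurable.
apply: measurable_fun_limn_esup => n.
apply/measurable_EFinP; apply: measurable_sum => k.
apply: measurable_funM; first exact: measurable_cst.
apply: (@mf_mono _ _ _ y (s%:Z - (k.+1)%:Z)); first lia.
exact: me.
Qed.

Definition v s x := ws s x - ytil (s%:Z - 1) x.
Definition u s x := clamp (2 * K0) (v s x).
Definition dd (s : nat) x := e s x ^+ 2 - sigma2 + 2 * e s x * u s x.

Lemma mu s : measurable_fun (G (s%:Z - 1)) (u s).
Proof.
apply: measurable_maxr; first exact: measurable_cst.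
apply: measurable_minr; first exact: measurable_cst.
apply: measurable_funB; first exact: mws.
exact: Gm_mf.
Qed.

Lemma u_bound s x : `|u s x| <= 2 * K0.
Proof. apply: clamp_bound; by rewrite mulr_ge0. Qed.

Definition C := K0 ^+ 2 + `|sigma2| + 4 * K0 ^+ 2.

Lemma dd_bound s x : `|dd s x| <= C.
Proof.
rewrite /dd /C; have h1 := e_bound s x; have h2 := u_bound s x.
apply: le_trans (ler_normD _ _) _; apply: lerD.
  apply: le_trans (ler_normB _ _) _; apply: lerD => //.
  by rewrite normrX lerXn2r // nnegrE.
rewrite !normrM.
have n2 : `|(2:R)| = 2 by rewrite ger0_norm.
rewrite n2; have := normr_ge0 (e s x); have := normr_ge0 (u s x); nra.
Qed.

Lemma mdd s : measurable_fun (G s%:Z) (dd s).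
Proof.
apply: measurable_funD.
  apply: measurable_funB; first by apply: measurable_funX; exact: me.
  exact: measurable_cst.
apply: measurable_funM.
  apply: measurable_funM; [exact: measurable_cst | exact: me].
apply: (@mf_mono _ _ _ y (s%:Z - 1)); first lia.
exact: mu.
Qed.

Hypothesis ce1 : forall t, is_cond_exp P (natural_filtration y (t - 1)) (eps t) (fun=> 0).
Hypothesis ce2 : forall t, is_cond_exp P (natural_filtration y (t - 1))
                (fun x => eps t x ^+ 2) (fun=> sigma2).
Hypothesis bnd : {ae P, forall x, forall t, `|eps t x| <= K}.

Lemma e_eps t : {ae P, forall x, e t x = eps t x}.
Proof.
apply: filterS bnd => x hx; rewrite /e clamp_id //.
exact: le_trans (hx t) (ler_norm K).
Qed.

Lemma meT t : measurable_fun setT (e t).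
Proof. exact: (mf_T _ _ _ my (me t)). Qed.

Lemma e_int0 t A : <<s gen y (t - 1) >> A -> \int[P]_(x in A) e t x = 0.
Proof.
move=> HA; have mA : measurable A by exact (nf_sub _ _ my _ HA).
case: (ce1 t) => _ _ /(_ A HA) h.
rewrite /Rintegral (_ : (\int[P]_(x in A) (e t x)%:E)%E = (\int[P]_(x in A) (eps t x)%:E)%E).
  by rewrite h integral0_eq.
apply: ae_eq_integral => //.
- by apply: measurable_funTS; apply/measurable_EFinP; exact: meT.
- apply: measurable_funTS; apply/measurable_EFinP.
  exact: (mf_T _ _ _ my (Gm_mf _ _ _ (epsG t))).
- by apply: filterS (e_eps t) => x hx _; rewrite /= hx.
Qed.

Lemma e2_int t A : <<s gen y (t - 1) >> A ->
  \int[P]_(x in A) (e t x ^+ 2 - sigma2) = 0.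
Proof.
move=> HA; have mA : measurable A by exact (nf_sub _ _ my _ HA).
case: (ce2 t) => _ _ /(_ A HA) h.
have me2 : measurable_fun setT (fun x => e t x ^+ 2) by apply: measurable_funX; exact: meT.
rewrite RintegralB //; last 2 first.
- apply: (bintD P _ _ (K0 ^+ 2)) => // x; rewrite normrX lerXn2r ?nnegrE //; exact: e_bound.
- apply: (bintD P _ _ `|sigma2|) => //; exact: measurable_cst.
rewrite Rintegral_cst // /Rintegral.
rewrite (_ : (\int[P]_(x in A) (e t x ^+ 2)%:E)%E = (\int[P]_(x in A) (eps t x ^+ 2)%:E)%E).
  rewrite h integral_cst //.
  rewrite fineM //= ?subrr //; exact: fin_num_measure.
apply: ae_eq_integral => //.
- by apply: measurable_funTS; apply/measurable_EFinP.
- apply: measurable_funTS; apply/measurable_EFinP.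
  by apply: measurable_funX; exact: (mf_T _ _ _ my (Gm_mf _ _ _ (epsG t))).
- by apply: filterS (e_eps t) => x hx _; rewrite /= hx.
Qed.

Lemma orth_dd (s : nat) (Z : T -> R) M :
  measurable_fun (G (s%:Z - 1)) Z -> (forall x, `|Z x| <= M) ->
  \int[P]_x (dd s x * Z x) = 0.
Proof.
move=> mZG ZM.
have M0 : 0 <= M by apply: le_trans (ZM point).
have mZ : measurable_fun setT Z := mf_T _ _ _ my mZG.
have mu' : measurable_fun (G (s%:Z - 1)) (fun x => 2 * u s x * Z x).
  apply: measurable_funM => //; apply: measurable_funM; [exact: measurable_cst|exact: mu].
have me2 : measurable_fun setT (fun x => e s x ^+ 2 - sigma2).
  by apply: measurable_funB; [apply: measurable_funX; exact: meT|exact: measurable_cst].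
have b1 x : `|e s x ^+ 2 - sigma2| <= K0 ^+ 2 + `|sigma2|.
  apply: le_trans (ler_normB _ _) _; apply: lerD => //.
  by rewrite normrX lerXn2r ?nnegrE //; exact: e_bound.
have b2 x : `|2 * u s x * Z x| <= 2 * (2 * K0) * M.
  rewrite !normrM ger0_norm //; apply: ler_pM => //; apply: ler_pM => //; exact: u_bound.
have -> : (fun x => dd s x * Z x) =
    (fun x => (e s x ^+ 2 - sigma2) * Z x + e s x * (2 * u s x * Z x)).
  by apply/funext => x; rewrite /dd; ring.
rewrite RintegralD //.
- rewrite (@orth _ _ _ P (gen y (s%:Z - 1)) _ _ (K0 ^+ 2 + `|sigma2|) M) //.
  + rewrite (@orth _ _ _ P (gen y (s%:Z - 1)) _ _ K0 (2 * (2 * K0) * M)) ?addr0 //.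
    * exact: nf_sub.
    * exact: meT.
    * exact: e_bound.
    * exact: e_int0.
  + exact: nf_sub.
  + exact: e2_int.
- apply: (bint P _ ((K0 ^+ 2 + `|sigma2|) * M)); first exact: measurable_funM.
  by move=> x; rewrite normrM; apply: ler_pM.
- apply: (bint P _ (K0 * (2 * (2 * K0) * M))).
    by apply: measurable_funM; [exact: meT|exact: (mf_T _ _ _ my mu')].
  by move=> x; rewrite normrM; apply: ler_pM => //; exact: e_bound.
Qed.

Definition S n x := \sum_(i < n) dd i.+1 x.

Lemma mS n : measurable_fun (G n%:Z) (S n).
Proof.
apply: measurable_sum => i; apply: (@mf_mono _ _ _ y (i.+1)%:Z).
  by have := ltn_ord i; lia.
exact: mdd.
Qed.

Lemma S_bound n x : `|S n x| <= n%:R * C.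
Proof.
apply: le_trans (ler_norm_sum _ _ _) _.
apply: le_trans (_ : \sum_(i < n) C <= _); first by apply: ler_sum => i _; exact: dd_bound.
by rewrite sumr_const card_ord mulr_natl.
Qed.

Lemma C0 : 0 <= C.
Proof. rewrite /C; have := normr_ge0 sigma2; have := sqr_ge0 K0; nra. Qed.

Lemma S2 n : \int[P]_x (S n x ^+ 2) <= n%:R * C ^+ 2.
Proof.
elim: n => [|n IH].
  rewrite (_ : (fun x => S 0 x ^+ 2) = fun=> 0); first by rewrite Rintegral_cst // !mul0r.
  by apply/funext => x; rewrite /S big_ord0 expr0n.
have -> : (fun x => S n.+1 x ^+ 2) =
    (fun x => (S n x ^+ 2 + 2 * (dd n.+1 x * S n x)) + dd n.+1 x ^+ 2).
  by apply/funext => x; rewrite /S big_ord_recr /=; ring.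
have mSn := mf_T _ _ _ my (mS n).
have mddT := mf_T _ _ _ my (mdd n.+1).
have i1 : P.-integrable setT (EFin \o (fun x => S n x ^+ 2)).
  apply: (bint P _ ((n%:R * C) ^+ 2)); first exact: measurable_funX.
  move=> x; apply: norm_sq_le; exact: S_bound.
have i2 : P.-integrable setT (EFin \o (fun x => dd n.+1 x * S n x)).
  apply: (bint P _ (C * (n%:R * C))); first exact: measurable_funM.
  move=> x; apply: norm_mul_le; [exact: dd_bound|exact: S_bound].
have i3 : P.-integrable setT (EFin \o (fun x => dd n.+1 x ^+ 2)).
  apply: (bint P _ (C ^+ 2)); first exact: measurable_funX.
  move=> x; apply: norm_sq_le; exact: dd_bound.
have i4 : P.-integrable setT (EFin \o (fun x => 2 * (dd n.+1 x * S n x))).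
  apply: (bint P _ (2 * (C * (n%:R * C)))).
    by apply: measurable_funM; [exact: measurable_cst|exact: measurable_funM].
  move=> x; rewrite normrM ger0_norm //; apply: ler_pM => //.
  apply: norm_mul_le; [exact: dd_bound|exact: S_bound].
have i5 : P.-integrable setT (EFin \o (fun x => S n x ^+ 2 + 2 * (dd n.+1 x * S n x))).
  have -> : EFin \o (fun x => S n x ^+ 2 + 2 * (dd n.+1 x * S n x)) =
     (EFin \o (fun x => S n x ^+ 2)) \+ (EFin \o (fun x => 2 * (dd n.+1 x * S n x))).
    by apply/funext.
  exact: integrableD.
rewrite RintegralD // RintegralD // RintegralZl //.
rewrite (@orth_dd n.+1 (S n) (n%:R * C)); last exact: S_bound; last first.
  by apply: (@mf_mono _ _ _ y n%:Z); [lia|exact: mS].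
rewrite mulr0 addr0 -natr1 mulrDl mul1r; apply: lerD => //.
apply: le_trans (_ : \int[P]_x (C ^+ 2) <= _).
  apply: le_Rintegral => //.
    by apply: (bint P _ (C ^+ 2)); [exact: measurable_cst|move=> _; rewrite ger0_norm // exprn_ge0 // C0].
  move=> x _; have := dd_bound n.+1 x; rewrite ler_norml => /andP[h1 h2]; nra.
rewrite Rintegral_cst //.
have -> : fine (P setT) = 1 by have /= -> := probability_setT P.
by rewrite mulr1.
Qed.

Lemma iS2 n : P.-integrable setT (EFin \o (fun x => S n x ^+ 2)).
Proof.
apply: (bint P _ ((n%:R * C) ^+ 2)).
  by apply: measurable_funX; exact: (mf_T _ _ _ my (mS n)).
move=> x; apply: norm_sq_le; exact: S_bound.
Qed.

Definition Nn m := (m.+1 * m.+1)%N.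
Definition fm m x := (S (Nn m) x / (Nn m)%:R) ^+ 2.

Lemma Nn0 m : 0 < (Nn m)%:R :> R.
Proof. by rewrite ltr0n /Nn muln_gt0. Qed.

Lemma fm_bound m x : `|fm m x| <= C ^+ 2.
Proof.
apply: norm_sq_le; rewrite normrM normfV (ger0_norm (ltW (Nn0 m))).
rewrite ler_pdivrMr ?Nn0 // mulrC; exact: S_bound.
Qed.

Lemma fm_ge0 m x : 0 <= fm m x.
Proof. exact: sqr_ge0. Qed.

Lemma mfm m : measurable_fun setT (fm m).
Proof.
apply: measurable_funX; apply: measurable_funM; last exact: measurable_cst.
exact: (mf_T _ _ _ my (mS _)).
Qed.

Lemma ifm m : P.-integrable setT (EFin \o fm m).
Proof. apply: (bint P _ (C ^+ 2)); [exact: mfm | exact: fm_bound]. Qed.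

Lemma fm_int m : \int[P]_x fm m x <= C ^+ 2 / (Nn m)%:R.
Proof.
have N0 := Nn0 m.
rewrite (_ : (fun x => fm m x) = (fun x => ((Nn m)%:R^-1) ^+ 2 * S (Nn m) x ^+ 2)); last first.
  by apply/funext => x; rewrite /fm exprMn mulrC.
rewrite RintegralZl //; last exact: iS2.
apply: le_trans (ler_wpM2l _ (S2 (Nn m))) _; first exact: sqr_ge0.
rewrite le_eqVlt; apply/orP; left; apply/eqP.
by rewrite expr2; field; rewrite gt_eqF.
Qed.

Lemma fmE m : (\int[P]_x (fm m x)%:E)%E = (\int[P]_x fm m x)%:E.
Proof. by rewrite /Rintegral fineK // integrable_fin_num //; exact: ifm. Qed.

Lemma fm_sum : (\sum_(m <oo) (\int[P]_x (fm m x)%:E) <= (2 * C ^+ 2)%:E)%E.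
Proof.
apply: (@le_trans _ _ (\sum_(m <oo) ((C ^+ 2 / (Nn m)%:R)%:E))%E).
  apply: lee_nneseries.
    by move=> i _ _; apply: integral_ge0 => x _; rewrite lee_fin fm_ge0.
  by move=> n _; rewrite fmE lee_fin fm_int.
apply: lime_le.
  apply: is_cvg_nneseries => n _ _; rewrite lee_fin divr_ge0 // ?sqr_ge0 // ltW // Nn0.
apply: nearW => n; rewrite sumEFin lee_fin big_mkord -mulr_sumr.
rewrite [X in _ <= X]mulrC; apply: ler_wpM2l; first exact: sqr_ge0.
apply: le_trans (inv_sq_sum n) _.
rewrite lerBlDr lerDl divr_ge0 //.
Qed.

Lemma ae_sub : {ae P, forall x, forall eps, 0 < eps -> exists M, forall m,
  (M <= m)%N -> `|S (Nn m) x| <= eps * (Nn m)%:R}.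
Proof.
pose g x := (\sum_(m <oo) (fm m x)%:E)%E.
have g0 x : (0 <= g x)%E by apply: nneseries_ge0 => n _ _; rewrite lee_fin fm_ge0.
have mg : measurable_fun setT g.
  apply: (emeasurable_fun_cvg (fun n x => (\sum_(0 <= i < n) (fm i x)%:E)%E)).
    move=> n; apply: emeasurable_sum => i; apply/measurable_EFinP; exact: mfm.
  move=> x _; apply: is_cvg_nneseries => n _ _; rewrite lee_fin fm_ge0.
  all: try done.
have ig : P.-integrable setT g.
  apply/integrableP; split; first exact: mg.
  under eq_integral => x _ do rewrite gee0_abs //.
  rewrite integral_nneseries //.
  - by apply: le_lt_trans fm_sum _; exact: ltry.
  - move=> n; apply/measurable_EFinP; exact: mfm.
  - by move=> n x _; rewrite lee_fin fm_ge0.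
have := integrable_ae measurableT ig.
apply: filterS => x /(_ I) gfin ep e0.
have gx : (\sum_(0 <= k <oo) (fm k x)%:E < +oo)%E.
  by rewrite -ge0_fin_numE //; exact: g0.
have hT : (\big[+%E/0]_(N <= k <oo) (fm k x)%:E @[N --> \oo] --> 0)%E.
  by apply: nneseries_tail_cvg gx _ => k _; rewrite lee_fin fm_ge0.
move/fine_cvgP: hT => [[M1 _ hM1] hcv].
have [M2 _ hM2] := cvgr_lt _ hcv _ (exprn_gt0 2 e0).
exists (maxn M1 M2) => m hm.
have f1 := hM1 m (leq_trans (leq_maxl _ _) hm).
have f2 := hM2 m (leq_trans (leq_maxr _ _) hm).
have f3 : ((fm m x)%:E <= \sum_(m <= k <oo) (fm k x)%:E)%E.
  apply: le_trans (nneseries_lim_ge m.+1 _); first by rewrite big_nat1.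
  by move=> n _ _; rewrite lee_fin fm_ge0.
move: f3; rewrite -(fineK f1) lee_fin => f3.
have f4 : fm m x < ep ^+ 2 by apply: le_lt_trans f3 f2.
move: f4; rewrite /fm; set a := S (Nn m) x / _ => f4.
have ha : `|a| <= ep by rewrite ler_norml; apply/andP; split; nra.
have N0 := Nn0 m.
have -> : S (Nn m) x = a * (Nn m)%:R by rewrite /a divfK // gt_eqF.
by rewrite normrM (ger0_norm (ltW N0)) ler_pM2r.
Qed.

Hypothesis k0 : kappa 0%N = 1.
Hypothesis MA : {ae P, forall x, forall t : int,
      series (fun s => kappa s * eps (t - s%:Z) x) @ \oo --> y t x}.

Lemma ws_eq x (s : nat) : (forall t, `|eps t x| <= K) ->
  series (fun k => kappa k * eps (s%:Z - k%:Z) x) @ \oo --> y s x ->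
  ws s x = y s x - e s x.
Proof.
move=> hb hc.
have he t : e t x = eps t x by rewrite /e clamp_id // (le_trans (hb t) (ler_norm K)).
pose part n := \sum_(k < n) kappa k.+1 * e (s%:Z - (k.+1)%:Z) x.
have pE n : part n = series (fun k => kappa k * eps (s%:Z - k%:Z) x) n.+1 - eps s x.
  rewrite seriesEord /= big_ord_recl /= k0 mul1r subr0 addrAC subrr add0r /part.
  apply: eq_bigr => k _; rewrite he.
  by have -> : bump 0 k = k.+1 by [].
have hp : part @ \oo --> y s x - eps s x.
  have -> : part = (fun n => series (fun k => kappa k * eps (s%:Z - k%:Z) x) n.+1 - eps s x).
    by apply/funext => n; exact: pE.
  apply: cvgB; last exact: cvg_cst.
  by rewrite (cvg_shiftS (fun n => series (fun k => kappa k * eps (s%:Z - k%:Z) x) n)).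
have hE : (fun n => (part n)%:E) @ \oo --> (y s x - eps s x)%:E.
  by apply/fine_cvgP; split; [exact: nearW | exact: hp].
rewrite /ws -/part.
have [_ ->] := cvg_limn_einf_sup hE.
by rewrite /= he.
Qed.

Lemma pt_ineq x (s : nat) : (forall t, `|eps t x| <= K) ->
  series (fun k => kappa k * eps (s%:Z - k%:Z) x) @ \oo --> y s x ->
  sigma2 + dd s x <= (y s x - ytil (s%:Z - 1) x) ^+ 2.
Proof.
move=> hb hc.
have -> : y s x - ytil (s%:Z - 1) x = e s x + v s x.
  by rewrite /v (ws_eq _ _ hb hc); ring.
rewrite /dd /u; have := key_ineq _ _ (v s x) (e_bound s x).
suff -> : sigma2 + (e s x ^+ 2 - sigma2 + 2 * e s x * clamp (2 * K0) (v s x)) =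
  e s x ^+ 2 + 2 * e s x * clamp (2 * K0) (v s x) by [].
ring.
Qed.

Lemma final : {ae P, forall x,
       (sigma2%:E <= limn_einf (fun t : nat =>
          ((t%:R)^-1 * \sum_(1 <= s < t.+1)
              (y s%:Z x - ytil (s%:Z - 1) x) ^+ 2)%:E))%E}.
Proof.
apply: (filterS3 _ _ bnd MA ae_sub) => x hb hm hs.
apply: (det (fun n => S n x) C).
- move=> n; rewrite /S big_ord_recr /= addrAC subrr add0r; exact: dd_bound.
- exact: hs.
move=> t t0.
have tt0 : 0 < t%:R :> R by rewrite ltr0n.
have h : t%:R * sigma2 + S t x <= \sum_(1 <= s < t.+1) (y s%:Z x - ytil (s%:Z - 1) x) ^+ 2.
  rewrite big_add1 /= big_mkord.
  have -> : t%:R * sigma2 + S t x = \sum_(i < t) (sigma2 + dd i.+1 x).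
    by rewrite big_split /= sumr_const card_ord mulr_natl.
  apply: ler_sum => i _; apply: pt_ineq => //; exact: hm.
rewrite ler_pdivlMl //.
have -> : t%:R * (sigma2 + S t x / t%:R) = t%:R * sigma2 + S t x.
  by field; rewrite gt_eqF.
exact: h.
Qed.

End main.

Theorem proposition4p3 (d : measure_display) (T : measurableType d)
  (R : realType) (P : probability T R)
  (y eps : int -> T -> R) (kappa : nat -> R) (sigma2 K p : R) :
  (* y is a real, mean-zero, covariance-stationary series *)
  (forall t, measurable_fun setT (y t)) ->
  (forall t, P.-integrable setT (EFin \o (fun x => y t x ^+ 2))) ->
  (forall t, (\int[P]_x (y t x)%:E = 0)%E) ->
  (exists gam : int -> R, forall t h,
      (\int[P]_x (y t x * y (t + h) x)%:E = (gam h)%:E)%E) ->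
  (* MA(infinity) representation *)
  kappa 0%N = 1 ->
  cvgn (series (fun s => `|kappa s|)) ->
  (forall z : R[i], `|z| <= 1 -> power_series_at kappa z != 0) ->
  {ae P, forall x, forall t : int,
      series (fun s => kappa s * eps (t - s%:Z) x) @ \oo --> y t x} ->
  (* eps is a martingale difference sequence w.r.t. F_t = sigma(y_s, s <= t) *)
  (forall t, G_measurable (natural_filtration y t) (eps t)) ->
  (forall t, P.-integrable setT (EFin \o eps t)) ->
  (forall t, is_cond_exp P (natural_filtration y (t - 1)) (eps t) (fun=> 0)) ->
  (* constant conditional variance *)
  (forall t, is_cond_exp P (natural_filtration y (t - 1))
                (fun x => eps t x ^+ 2) (fun=> sigma2)) ->
  (* uniform almost sure bound *)
  {ae P, forall x, forall t, `|eps t x| <= K} ->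
  (* sup_t E[|eps_t|^{2p} | F_{t-1}] < oo a.s., for some p > 1 *)
  1 < p ->
  (exists Z : int -> T -> R,
      (forall t, is_cond_exp P (natural_filtration y (t - 1))
                   (fun x => `|eps t x| `^ (2 * p)) (Z t)) /\
      {ae P, forall x, exists M : R, forall t, Z t x <= M}) ->
  (* conclusion, for any F_{t-1}-predictor ytilde_{t-1} *)
  forall ytil : int -> T -> R,
    (forall t, G_measurable (natural_filtration y t) (ytil t)) ->
    {ae P, forall x,
       (sigma2%:E <= limn_einf (fun t : nat =>
          ((t%:R)^-1 * \sum_(1 <= s < t.+1)
              (y s%:Z x - ytil (s%:Z - 1) x) ^+ 2)%:E))%E}.
Proof.
move=> my _ _ _ k0 _ _ MA epsG _ ce1 ce2 bnd _ _ ytil ytilG.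
exact: (final P _ _ _ _ _ _ my epsG ytilG ce1 ce2 bnd k0 MA).
Qed.
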